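(* Let $\mu_1,\mu_2$ be finite Borel measures on $M$ with $\mu_1\geqslant\mu_2$, i.e. $\mu_1=\mu_2+m$ for some non-negative Borel measure $m$. Let $\mathcal A$ be a finite measurable partition and $\mathcal B$ a measurable partition. Then $$H_{\mu_1}(\mathcal A\mid\mathcal B)\geqslant H_{\mu_2}(\mathcal A\mid\mathcal B).$$
   Context: For a probability measure $\mu$, $H_\mu(\mathcal A\mid\mathcal B)=\int H_{\mu_{x,\mathcal B}}(\mathcal A)\,\mathrm d\mu(x)$ with $\{\mu_{x,\mathcal B}\}$ the conditional measures of $\mu$ on atoms of $\mathcal B$ and $H_\nu(\mathcal A)=-\sum_{A\in\mathcal A}\nu(A)\log\nu(A)$. For a finite nonzero Borel measure $\mu$, $H_\mu(\mathcal A\mid\mathcal B):=\mu(M)\cdot H_{\bar\mu}(\mathcal A\mid\mathcal B)$ with $\bar\mu=\mu/\mu(M)$ (and $0$ for the zero measure). *)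

(* Defs.v *)
From HB Require Import structures.
From mathcomp Require Import all_boot all_order all_algebra.
From mathcomp Require Import all_classical all_reals all_analysis.
From mathcomp Require Import measurable_realfun.
Set Implicit Arguments. Unset Strict Implicit. Unset Printing Implicit Defensive.
Import Order.TTheory GRing.Theory Num.Theory.
Local Open Scope classical_set_scope.
Local Open Scope ring_scope.

Definition finite_meas_partition d (M : measurableType d) n (A : 'I_n -> set M) :=
  (forall i, measurable (A i)) /\
  (forall i j, i != j -> A i `&` A j = set0) /\
  \big[setU/set0]_(i < n) A i = setT.

Definition xlogx (R : realType) (p : R) : R := if p == 0 then 0 else p * ln p.

Definition entropy d (M : measurableType d) (R : realType)
  (nu : probability M R) n (A : 'I_n -> set M) : R :=
  - \sum_(i < n) xlogx (fine (nu (A i))).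

(* The measurable partition B is given as the partition into the fibres
   pi^-1 {pi x} of a measurable map pi : M -> Y.
   A system of conditional measures of the (finite) measure mu on the atoms
   of B is a family y |-> nu y of probability measures (indexed by the atom
   pi x) such that y |-> nu y C is measurable and
   mu (C `&` pi^-1 D) = \int_{pi^-1 D} nu (pi x) C dmu(x).
   (This condition is invariant under scaling mu, so it is the same as for
    the normalized measure mu / mu(M).) *)
Definition is_cond_measures d (M : measurableType d) d' (Y : measurableType d')
  (R : realType) (mu : {measure set M -> \bar R}) (pi : M -> Y)
  (nu : Y -> probability M R) :=
  forall C, measurable C ->
    measurable_fun [set: Y] (fun y : Y => nu y C : \bar R) /\
    forall D, measurable D ->
      mu (C `&` pi @^-1` D) = (\int[mu]_(x in pi @^-1` D) nu (pi x) C)%E.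

(* H_mu(A|B) = mu(M) * \int H_{mu_{x,B}}(A) d(mu/mu(M)) = \int H_{mu_{x,B}}(A) dmu
   (and 0 for the zero measure, which the right-hand side also gives). *)
Definition cond_entropy d (M : measurableType d) d' (Y : measurableType d')
  (R : realType) (mu : {measure set M -> \bar R}) (pi : M -> Y)
  (nu : Y -> probability M R) n (A : 'I_n -> set M) : \bar R :=
  (\int[mu]_x (entropy (nu (pi x)) A)%:E)%E.

(* Main.v *)
Require Import Defs.
From HB Require Import structures.
From mathcomp Require Import all_boot all_order all_algebra.
From mathcomp Require Import all_classical all_reals all_analysis.
From mathcomp Require Import measurable_realfun.
From mathcomp Require Import lra.
Import Order.TTheory GRing.Theory Num.Theory.
Local Open Scope classical_set_scope.
Local Open Scope ring_scope.
Import HBNNSimple.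
Section key.
Local Open Scope ereal_scope.
Context d (M : measurableType d) d' (Y : measurableType d') (R : realType).
Variables (pi : M -> Y) (mpi : measurable_fun setT pi).

Lemma key_term (mu : {measure set M -> \bar R}) (f : M -> R)
  (f0 : forall x, (0 <= f x)%R)
  (mf : measurable_fun setT f) (S : set Y) (mS : measurable S) (r : R) :
  (0 <= r)%R ->
  \int[mu]_x ((f x * (r * \1_S (pi x)))%:E) =
  r%:E * \int[mu]_(x in pi @^-1` S) (f x)%:E.
Proof.
move=> r0.
have mP : measurable (pi @^-1` S) by rewrite -[_ @^-1` _]setTI; exact: mpi.
rewrite -[pi @^-1` S]setTI integral_mkcondr.
rewrite -ge0_integralZl //; last 2 first.
- apply/(measurable_restrictT _ _).1 => //; apply/measurable_funTS; exact/measurable_EFinP.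
- by move=> x _; rewrite /patch; case: ifP => // _; rewrite lee_fin.
apply: eq_integral => x _.
rewrite epatch_indic /= -!EFinM; congr (_%:E).
by rewrite mulrCA mulrA.
Qed.


Lemma key_simple (mu : {measure set M -> \bar R}) (f : M -> R)
  (f0 : forall x, (0 <= f x)%R)
  (mf : measurable_fun setT f) (h : {nnsfun Y >-> R}) :
  \int[mu]_x ((f x)%:E * (h (pi x))%:E) =
  \sum_(r \in range h) (r%:E * \int[mu]_(x in pi @^-1` (h @^-1` [set r])) (f x)%:E).
Proof.
under eq_integral => x _.
  rewrite -EFinM fimfunE mulr_fsumr -fsumEFin; last exact: fimfunP.
  over.
rewrite ge0_integral_fsum //; last 2 first.
- move=> r; apply/measurable_EFinP; apply: measurable_funM => //.
  apply: measurable_funM => //.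
  exact: (measurableT_comp (measurable_indic _) mpi).
- move=> r x _; rewrite EFinM mule_ge0 ?lee_fin//.
  by have := nnfun_muleindic_ge0 h r (pi x); rewrite -EFinM lee_fin.
apply: eq_fsbigr => r; rewrite inE => -[y _ <-].
by rewrite key_term.
Qed.

Lemma key (mu1 mu2 : {measure set M -> \bar R}) (f1 f2 : M -> R)
  (f10 : forall x, (0 <= f1 x)%R) (f20 : forall x, (0 <= f2 x)%R)
  (mf1 : measurable_fun setT f1) (mf2 : measurable_fun setT f2)
  (H : forall S, measurable S ->
    \int[mu2]_(x in pi @^-1` S) (f2 x)%:E <= \int[mu1]_(x in pi @^-1` S) (f1 x)%:E)
  (psi : Y -> \bar R) (psi0 : forall y, 0 <= psi y)
  (mpsi : measurable_fun setT psi) :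
  \int[mu2]_x ((f2 x)%:E * psi (pi x)) <= \int[mu1]_x ((f1 x)%:E * psi (pi x)).
Proof.
pose h := nnsfun_approx measurableT mpsi.
have mh n : measurable_fun setT (fun x => (h n (pi x))%:E).
  by apply/measurable_EFinP; apply: measurableT_comp.
have E (mu : {measure set M -> \bar R}) (f : M -> R) :
    (forall x, 0 <= f x)%R -> measurable_fun setT f ->
  \int[mu]_x ((f x)%:E * psi (pi x)) =
  limn (fun n => \int[mu]_x ((f x)%:E * (h n (pi x))%:E)).
  move=> f0 mf.
  rewrite -monotone_convergence //.
  - apply: eq_integral => x _; apply/esym/cvg_lim => //.
    apply: cvgeZl => //.
    by apply: cvg_nnsfun_approx.
  - move=> n; apply: emeasurable_funM => //; exact/measurable_EFinP.
  - by move=> n x _; rewrite mule_ge0 ?lee_fin.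
  - move=> x _ a b ab; apply: lee_wpmul2l; first by rewrite lee_fin.
    by rewrite lee_fin; exact/lefP/nd_nnsfun_approx.
have C (mu : {measure set M -> \bar R}) (f : M -> R) :
    (forall x, 0 <= f x)%R -> measurable_fun setT f ->
  cvgn (fun n => \int[mu]_x ((f x)%:E * (h n (pi x))%:E)).
  move=> f0 mf; apply: ereal_nondecreasing_is_cvgn => a b ab.
  apply: ge0_le_integral => //.
  - by move=> x _; rewrite mule_ge0 ?lee_fin.
  - apply: emeasurable_funM => //; exact/measurable_EFinP.
  - apply: emeasurable_funM => //; exact/measurable_EFinP.
  - move=> x _; apply: lee_wpmul2l; first by rewrite lee_fin.
    by rewrite lee_fin; exact/lefP/nd_nnsfun_approx.
rewrite (E mu2) // (E mu1) //.
apply: lee_lim; [exact: C|exact: C|].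
apply: nearW => n.
rewrite !key_simple //.
apply: lee_fsum => // r -[y _ <-].
apply: lee_wpmul2l; first by rewrite lee_fin.
exact: H.
Qed.

End key.
Section pw.
Context {R : realType}.
Local Open Scope ereal_scope.

Definition phi (q : R) : \bar R := if q == 0%R then +oo else (- ln q)%:E.

Lemma phi_ge0 q : (q <= 1)%R -> 0 <= phi q.
Proof.
move=> q1; rewrite /phi; case: ifP => // _.
by rewrite lee_fin oppr_ge0 ln_le0.
Qed.

Lemma term_eq q : (- xlogx q)%:E = q%:E * phi q.
Proof.
rewrite /phi /xlogx; case: ifP => [/eqP ->|_]; first by rewrite mul0e oppr0.
by rewrite -EFinM mulrN.
Qed.

Lemma term_le p q : (0 <= p)%R -> (0 <= q)%R ->
  (- xlogx p)%:E <= p%:E * phi q + (q - p)%:E.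
Proof.
move=> p0 q0; rewrite /phi /xlogx.
have [->|pn0] := eqVneq p 0%R.
  by rewrite mul0e add0e lee_fin; lra.
have pp : (0 < p)%R by rewrite lt_neqAle eq_sym pn0.
case: ifP => [_|/negbT qn0].
  by rewrite gt0_muley ?lte_fin // addye // leey.
have qp : (0 < q)%R by rewrite lt_neqAle eq_sym qn0.
rewrite -EFinM -EFinD lee_fin.
have h1 : (ln (q / p) <= q / p - 1)%R.
  have := @le_ln1Dx R (q / p - 1).
  rewrite addrCA subrr addr0; apply.
  have : (0 < q / p)%R by rewrite divr_gt0.
  lra.
rewrite ln_div ?posrE // in h1.
have h2 := ler_wpM2l (ltW pp) h1.
rewrite mulrBr mulrBr mulr1 mulrCA divff ?mulr1 // in h2.
lra.
Qed.

Lemma measurable_phi : measurable_fun setT (@phi).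
Proof.
apply: measurable_fun_ifT.
- exact: measurable_fun_eqr.
- exact: measurable_cst.
- apply/measurable_EFinP; apply: measurableT_comp => //.
Qed.

Lemma measurable_nxlogx : measurable_fun setT (fun p : R => (- xlogx p)%R).
Proof.
apply: measurableT_comp => //.
apply: measurable_fun_ifT.
- exact: measurable_fun_eqr.
- exact: measurable_cst.
- by apply: measurable_funM => //.
Qed.

End pw.

Theorem lemma3p2 (d : measure_display) (M : measurableType d)
  (d' : measure_display) (Y : measurableType d') (R : realType)
  (mu1 mu2 : {finite_measure set M -> \bar R})
  (m : {measure set M -> \bar R})
  (Hm : forall S, measurable S -> mu1 S = (mu2 S + m S)%E)
  (n : nat) (A : 'I_n -> set M) (HA : finite_meas_partition A)
  (pi : M -> Y) (Hpi : measurable_fun setT pi)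
  (nu1 nu2 : Y -> probability M R)
  (Hnu1 : is_cond_measures mu1 pi nu1)
  (Hnu2 : is_cond_measures mu2 pi nu2) :
  (cond_entropy mu2 pi nu2 A <= cond_entropy mu1 pi nu1 A)%E.
Proof.
case: HA => mA [dA cA].
pose g (nu : Y -> probability M R) i y := fine (nu y (A i)).
have gE nu i y : (g nu i y)%:E = nu y (A i).
  by rewrite /g fineK // (fin_num_measure (nu y) _ (mA i)).
have g0 nu i y : (0 <= g nu i y)%R by rewrite -lee_fin gE.
have g1 nu i y : (g nu i y <= 1)%R by rewrite -lee_fin gE probability_le1.
have tA : trivIset setT A.
  move=> i j _ _ nz; apply/eqP; case: (eqVneq i j) => // /dA eAij.
  by move: nz; rewrite eAij => -[].
have gsum nu y : (\sum_(i < n) g nu i y = 1)%R.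
  have : ((\sum_(i < n) g nu i y)%:E = 1%:E)%E.
    rewrite -sumEFin; under eq_bigr do rewrite gE.
    by rewrite -measure_bigsetU_ord // cA; exact: probability_setT.
  by case.
have mg (mu : {measure set M -> \bar R}) nu (Hnu : is_cond_measures mu pi nu) i :
    measurable_fun setT (g nu i).
  by apply: measurableT_comp => //; exact: (Hnu _ (mA i)).1.
have mgpi (mu : {measure set M -> \bar R}) nu (Hnu : is_cond_measures mu pi nu) i :
    measurable_fun setT (fun x => g nu i (pi x)).
  by apply: measurableT_comp => //; exact: mg Hnu i.
have mH (mu : {measure set M -> \bar R}) nu (Hnu : is_cond_measures mu pi nu) i D :
    measurable D ->
    (\int[mu]_(x in pi @^-1` D) (g nu i (pi x))%:E = mu (A i `&` pi @^-1` D))%E.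
  move=> mD; rewrite ((Hnu _ (mA i)).2 D mD).
  by apply: eq_integral => x _; rewrite gE.
rewrite /cond_entropy /entropy.
have eE (nu : Y -> probability M R) x : ((- \sum_(i < n) xlogx (fine (nu (pi x) (A i))))%:E =
   \sum_(i < n) (- xlogx (g nu i (pi x)))%:E)%E.
  by rewrite sumEFin sumrN.
under eq_integral do rewrite eE.
under [X in (_ <= X)%E]eq_integral do rewrite eE.
apply: (@le_trans _ _ (\int[mu2]_x \sum_(i < n)
   ((g nu2 i (pi x))%:E * phi (g nu1 i (pi x))))%E).
  apply: ge0_le_integral => //.
  - move=> x _; apply: sume_ge0 => i _.
    by rewrite term_eq mule_ge0 ?lee_fin ?phi_ge0.
  - apply: emeasurable_sum => i; apply/measurable_EFinP.
    exact: measurableT_comp measurable_nxlogx (mgpi _ _ Hnu2 i).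
  - apply: emeasurable_sum => i; apply: emeasurable_funM.
      by apply/measurable_EFinP; exact: mgpi Hnu2 i.
    exact: measurableT_comp measurable_phi (mgpi _ _ Hnu1 i).
  - move=> x _.
    apply: (@le_trans _ _ (\sum_(i < n) ((g nu2 i (pi x))%:E * phi (g nu1 i (pi x))
        + (g nu1 i (pi x) - g nu2 i (pi x))%:E))%E).
      by apply: lee_sum => i _; exact: term_le.
    rewrite big_split /= sumEFin sumrB !gsum subrr adde0.
    by [].
rewrite ge0_integral_sum //; last 2 first.
- move=> i; apply: emeasurable_funM.
    by apply/measurable_EFinP; exact: mgpi Hnu2 i.
  exact: measurableT_comp measurable_phi (mgpi _ _ Hnu1 i).
- by move=> i x _; rewrite mule_ge0 ?lee_fin ?phi_ge0.
under [X in (_ <= X)%E]eq_integral do under eq_bigr do rewrite term_eq.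
rewrite ge0_integral_sum //; last 2 first.
- move=> i; apply: emeasurable_funM.
    by apply/measurable_EFinP; exact: mgpi Hnu1 i.
  exact: measurableT_comp measurable_phi (mgpi _ _ Hnu1 i).
- by move=> i x _; rewrite mule_ge0 ?lee_fin ?phi_ge0.
apply: lee_sum => i _.
apply: (@key _ _ _ _ _ pi Hpi mu1 mu2 (fun x => g nu1 i (pi x))
   (fun x => g nu2 i (pi x)) _ _ _ _ _ (fun y => phi (g nu1 i y))).
- by move=> x.
- by move=> x.
- exact: mgpi Hnu1 i.
- exact: mgpi Hnu2 i.
- move=> S mS; rewrite (mH _ _ Hnu1) // (mH _ _ Hnu2) //.
  have mAS : measurable (A i `&` pi @^-1` S).
    apply: measurableI => //; rewrite -[_ @^-1` _]setTI; exact: Hpi.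
  have E' : (mu2 (A i `&` pi @^-1` S) + m (A i `&` pi @^-1` S) <=
     mu1 (A i `&` pi @^-1` S))%E by rewrite Hm.
  exact: le_trans (leeDl _ _) E'.
- by move=> y; rewrite phi_ge0.
- exact: measurableT_comp measurable_phi (mg _ _ Hnu1 i).
Qed.
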